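(* Suppose a sesquiunital sesquialgebra structure of finite free type on $k^G$ admits an antipode (i.e. is hopfish). If $g,h\in G$ satisfy $r(g)=l(h)$, then there exists $s\in G$ with $d^s_{gh}\neq0$.
   Context: $k$ is a field, $G$ a finite set, $A=k^G$ (pointwise operations), $A^{\otimes r}=k^{G^r}$, $A^{op}=A$, $\delta_x$ the characteristic function of $x$; $\delta_{a,b}$ the Kronecker delta; ${}^*$ is the $k$-dual. A sesquiunital sesquialgebra on $A$ is an $(A\otimes A,A)$-bimodule $\boldsymbol\Delta$ and right $A$-module $\boldsymbol\epsilon$ with $(A\otimes\boldsymbol\Delta)\otimes_{A\otimes A}\boldsymbol\Delta\cong(\boldsymbol\Delta\otimes A)\otimes_{A\otimes A}\boldsymbol\Delta$ and $(\boldsymbol\epsilon\otimes A)\otimes_{A\otimes A}\boldsymbol\Delta\cong A\cong(A\otimes\boldsymbol\epsilon)\otimes_{A\otimes A}\boldsymbol\Delta$. Decompose $\boldsymbol\Delta=\bigoplus\boldsymbol\Delta^g_{hk}$, $\boldsymbol\Delta^g_{hk}=(\delta_h\otimes\delta_k)\boldsymbol\Delta\delta_g$, and $\boldsymbol\epsilon=\bigoplus\boldsymbol\epsilon^g$, $\boldsymbol\epsilon^g=\boldsymbol\epsilon\delta_g$; finite free type means all components are finite-dimensional; $d^g_{hk}=\dim\boldsymbol\Delta^g_{hk}$, $e^g=\dim\boldsymbol\epsilon^g\in\{0,1\}$; $G^0=\{g:e^g=1\}$; $l(g),r(g)\in G^0$ are the unique elements with $d^k_{hg}=\delta_{h,l(g)}\delta_{g,k}$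 and $d^k_{gh}=\delta_{r(g),h}\delta_{g,k}$ for all $h\in G^0$, $k\in G$. A preantipode is a left $A\otimes A$-module $\mathbf S$ with an isomorphism of right $A\otimes A$-modules $\mathbf S^*\cong\mathrm{Hom}_A(\boldsymbol\epsilon,\boldsymbol\Delta)$ (right $A$-module maps, with $(gb)(u)=g(bu)$); it is an antipode (and the structure is hopfish) if $\mathbf S$ is free of rank one as a module over the first tensor factor $A$. *)

(* Defs.v *)
From mathcomp Require Import all_boot all_order all_algebra.
Set Implicit Arguments. Unset Strict Implicit. Unset Printing Implicit Defensive.
Import GRing.Theory.
Local Open Scope ring_scope.

(* A module (resp. bimodule) over tensor powers of A = k^G is the
   same thing as a G^n-graded k-vector space: it is the direct sum of its
   components (idempotents delta_x act as projections).  For a structure of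
   finite free type every component is a finite-dimensional k-vector space,
   modelled here by a [vectType k].

   Delta g h k' = Δ^g_{h k'} = (δ_h ⊗ δ_k') Δ δ_g,  Eps g = ε^g = ε δ_g.     *)

Section Sesqui.
Variables (k : fieldType) (G : finType).

Definition dimD (Delta : G -> G -> G -> vectType k) (g h k' : G) : nat :=
  \dim {: Delta g h k'}.
Definition dimE (Eps : G -> vectType k) (g : G) : nat := \dim {: Eps g}.

(* Components of the composite bimodules (A^{⊗3}, A): an isomorphism of
   graded spaces with finite-dimensional components is the same as an
   equality of the dimensions of all components.
   ((A⊗Δ)⊗_{A⊗A}Δ)^g_{xyz} = ⊕_m Δ^m_{yz} ⊗ Δ^g_{xm},
   ((Δ⊗A)⊗_{A⊗A}Δ)^g_{xyz} = ⊕_m Δ^m_{xy} ⊗ Δ^g_{mz}.                      *)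
Definition coassoc_iso (Delta : G -> G -> G -> vectType k) : Prop :=
  forall x y z g : G,
    (\sum_(m : G) dimD Delta m y z * dimD Delta g x m =
     \sum_(m : G) dimD Delta m x y * dimD Delta g m z)%N.

(* ((ε⊗A)⊗_{A⊗A}Δ)^g_y = ⊕_a ε^a ⊗ Δ^g_{ay} ≅ A^g_y = δ_{y,g} k, and
   ((A⊗ε)⊗_{A⊗A}Δ)^g_y = ⊕_a ε^a ⊗ Δ^g_{ya} ≅ δ_{y,g} k.                  *)
Definition counit_iso (Delta : G -> G -> G -> vectType k)
    (Eps : G -> vectType k) : Prop :=
  (forall y g : G,
     (\sum_(a : G) dimE Eps a * dimD Delta g a y)%N = (y == g) :> nat) /\
  (forall y g : G,
     (\sum_(a : G) dimE Eps a * dimD Delta g y a)%N = (y == g) :> nat).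

Definition sesquialgebra (Delta : G -> G -> G -> vectType k)
    (Eps : G -> vectType k) : Prop :=
  coassoc_iso Delta /\ counit_iso Delta Eps.

(* Hom_A(ε, Δ) as a (right) A⊗A-module: its (h,k')-component is
   ⊕_g Hom_k(ε^g, Δ^g_{hk'}). *)
Definition dimHom (Delta : G -> G -> G -> vectType k) (Eps : G -> vectType k)
    (h k' : G) : nat :=
  (\sum_(g : G) dimE Eps g * dimD Delta g h k')%N.

(* An antipode: a left A⊗A-module S (components S h k' = (δ_h⊗δ_k') S),
   with S^* ≅ Hom_A(ε,Δ) as right A⊗A-modules (componentwise: the dual of
   S_{hk'} is isomorphic to the (h,k')-component of Hom_A(ε,Δ); the latter
   being finite-dimensional, so is S_{hk'}, whose dual has the same
   dimension), and S free of rank one over the first tensor factor A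
   (i.e. for every h, ⊕_{k'} S_{hk'} ≅ k).                                  *)
Definition hopfish (Delta : G -> G -> G -> vectType k)
    (Eps : G -> vectType k) : Prop :=
  exists S : G -> G -> vectType k,
    (forall h k' : G, \dim {: S h k'} = dimHom Delta Eps h k') /\
    (forall h : G, (\sum_(k' : G) \dim {: S h k'})%N = 1%N).

Definition G0 (Eps : G -> vectType k) (g : G) : bool := dimE Eps g == 1%N.

Definition is_l (Delta : G -> G -> G -> vectType k) (Eps : G -> vectType k)
    (g x : G) : Prop :=
  G0 Eps x /\
  forall h k' : G, G0 Eps h ->
    dimD Delta k' h g = ((h == x) && (g == k')) :> nat.

Definition is_r (Delta : G -> G -> G -> vectType k) (Eps : G -> vectType k)
    (g x : G) : Prop :=
  G0 Eps x /\
  forall h k' : G, G0 Eps h ->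
    dimD Delta k' g h = ((x == h) && (g == k')) :> nat.

End Sesqui.

(* Main.v *)
Require Import Defs.
From mathcomp Require Import all_boot all_order all_algebra.

Lemma sum_pos_ex (I : finType) (F : I -> nat) :
  (0 < \sum_(i : I) F i)%N -> exists i, (0 < F i)%N.
Proof.
move=> Hs; case: (pickP (fun i => 0 < F i)%N) => [i Hi|H]; first by exists i.
move: Hs; rewrite big1 // => i _; move: (H i) => /negbT; by rewrite lt0n negbK => /eqP.
Qed.

Lemma term_le_sum (I : finType) (F : I -> nat) (i : I) :
  (F i <= \sum_(j : I) F j)%N.
Proof. by rewrite (bigD1 i) //= leq_addr. Qed.

Arguments sum_pos_ex {I F}.
Arguments term_le_sum {I} F i.

Theorem proposition6p7 (k : fieldType) (G : finType)
    (Delta : G -> G -> G -> vectType k) (Eps : G -> vectType k) :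
  sesquialgebra Delta Eps ->
  hopfish Delta Eps ->
  forall g h x : G,
    is_r Delta Eps g x -> is_l Delta Eps h x ->
    exists s : G, dimD Delta s g h <> 0%N.
Proof.
move=> [Hco [Hcl Hcr]] [S [HS1 HS2]] g h x [Gx Hr] [_ Hl].
set d := dimD Delta in Hco Hcl Hcr Hr Hl *.
set e := dimE Eps in Hcl Hcr HS1 Gx.
have ex1 : e x = 1%N by apply/eqP.
have H1 := HS2 h.
rewrite (eq_bigr _ (fun k' _ => HS1 h k')) /dimHom in H1.
have [z Hz] : exists z, (0 < \sum_(a : G) e a * d a h z)%N.
  by apply: sum_pos_ex; rewrite H1.
have [a0 /[!muln_gt0] /andP[ea0 da0]] := sum_pos_ex Hz.
have Hc := Hco x h z a0.
have : (0 < \sum_(m : G) d m x h * d a0 m z)%N.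
  apply: leq_trans (term_le_sum _ h).
  by rewrite (Hl x h Gx) !eqxx /= mul1n.
rewrite -Hc => /sum_pos_ex [m /[!muln_gt0] /andP[dm1 dm2]].
have Em : m = a0.
  have := Hcl m a0.
  have := term_le_sum (fun a => e a * d a0 a m)%N x.
  rewrite /= ex1 mul1n => Hle Heq.
  move: (leq_trans dm2 Hle); rewrite Heq.
  by case: eqP.
subst m.
have Ex : x = a0.
  have := Hcr x a0.
  have := term_le_sum (fun a => e a * d a0 x a)%N a0.
  move=> Hle Heq.
  have : (0 < e a0 * d a0 x a0)%N by rewrite muln_gt0 ea0.
  move=> /leq_trans /(_ Hle); rewrite Heq.
  by case: eqP.
subst a0.
have Hc2 := Hco g h z g.
have : (0 < \sum_(m : G) d m h z * d g g m)%N.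
  apply: leq_trans (term_le_sum _ x).
  by rewrite (Hr x g Gx) !eqxx /= muln1.
rewrite Hc2 => /sum_pos_ex [s /[!muln_gt0] /andP[ds _]].
by exists s; move: ds; rewrite lt0n => /eqP.
Qed.
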